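(* In the setting described in the context, the computable error estimator $\eta^{(2)}$ satisfies $$|J(u)-J(\tilde u)|-|J(u)-J(u_h^{(2)})|\le|\eta^{(2)}|\le|J(u)-J(\tilde u)|+|J(u)-J(u_h^{(2)})|.$$
   Context: Let $U$ and $V$ be real Banach spaces with dual $V^*$. Let $\mathcal{A}:U\to V^*$ be a (nonlinear) operator that is three times continuously Fréchet differentiable, and let $J:U\to\mathbb{R}$ be three times continuously Fréchet differentiable. Notation: $\mathcal{A}(w)(v)$ is the value of $\mathcal{A}(w)\in V^*$ at $v\in V$. For fixed $v$, $\mathcal{A}'(w)(\varphi,v)$, $\mathcal{A}''(w)(\varphi,\psi,v)$ and $\mathcal{A}'''(w)(\varphi,\psi,\chi,v)$ denote the first, second and third Fréchet derivatives of $w\mapsto\mathcal{A}(w)(v)$ at $w$ in the directions $\varphi,\psi,\chi\in U$. Analogously, $J'(w)(\varphi)$ and $J'''(w)(\varphi,\psi,\chi)$ denote derivatives of $J$. Let $u\in U$ satisfy $\mathcal{A}(u)(v)=0$ for all $v\in V$, and let $z\in V$ satisfy $\mathcal{A}'(u)(\varphi,z)=J'(u)(\varphi)$ for all $\varphi\in U$. Let $U_h^{(2)}\subset U$ and $V_h^{(2)}\subset V$ be finite-dimensional subspaces. Let $u_h^{(2)}\in U_h^{(2)}$ satisfy $\mathcal{A}(u_h^{(2)})(v)=0$ for all $v\in V_h^{(2)}$. Let $z_h^{(2)}\in V_h^{(2)}$ satisfy $\mathcal{A}'(u_h^{(2)})(\varphi,z_h^{(2)})=J'(u_h^{(2)})(\varphi)$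 for all $\varphi\in U_h^{(2)}$. Let $\tilde u\in U_h^{(2)}$ and $\tilde z\in V_h^{(2)}$ be arbitrary fixed elements. Define $\rho(\tilde u)(v):=-\mathcal{A}(\tilde u)(v)$ and $\rho^*(\tilde u,\tilde z)(\varphi):=J'(\tilde u)(\varphi)-\mathcal{A}'(\tilde u)(\varphi,\tilde z)$. With $e^{(2)}:=u_h^{(2)}-\tilde u$ and $e^{(2),*}:=z_h^{(2)}-\tilde z$, define $$\mathcal{R}^{(3)(2)}:=\frac12\int_0^1\Big[J'''(\tilde u+se^{(2)})(e^{(2)},e^{(2)},e^{(2)})-\mathcal{A}'''(\tilde u+se^{(2)})(e^{(2)},e^{(2)},e^{(2)},\tilde z+se^{(2),*})-3\mathcal{A}''(\tilde u+se^{(2)})(e^{(2)},e^{(2)},e^{(2),*})\Big]s(s-1)\,ds,$$ and $$\eta^{(2)}:=\tfrac12\rho(\tilde u)(z_h^{(2)}-\tilde z)+\tfrac12\rho^*(\tilde u,\tilde z)(u_h^{(2)}-\tilde u)+\rho(\tilde u)(\tilde z)+\mathcal{R}^{(3)(2)}.$$ *)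

(* Defs.v *)
From HB Require Import structures.
From mathcomp Require Import all_boot all_order all_algebra.
From mathcomp Require Import all_classical all_reals all_analysis.
Set Implicit Arguments. Unset Strict Implicit. Unset Printing Implicit Defensive.
Import Order.TTheory GRing.Theory Num.Theory.
Import numFieldNormedType.Exports.
Local Open Scope classical_set_scope.
Local Open Scope ring_scope.

(* Families of (multi)linear forms indexed by a point w : U.  A family is
   F : U -> X -> R, where X is the type of argument tuples and P : X -> R is
   the product of the norms of the arguments, so that "|T x| <= C * P x for
   all x" expresses the operator norm bound ||T|| <= C. *)

Definition frechet_deriv (R : realType) (U : normedModType R) (X : Type)
  (P : X -> R) (F : U -> X -> R) (DF : U -> U -> X -> R) : Prop :=
  forall w : U, forall e : R, 0 < e -> exists d : R, 0 < d /\
    forall h : U, `|h| < d -> forall x : X,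
      `|F (w + h) x - F w x - DF w h x| <= e * `|h| * P x.

Definition op_continuous (R : realType) (U : normedModType R) (X : Type)
  (P : X -> R) (F : U -> X -> R) : Prop :=
  forall w : U, forall e : R, 0 < e -> exists d : R, 0 < d /\
    forall w' : U, `|w' - w| < d -> forall x : X, `|F w' x - F w x| <= e * P x.

Definition op_bounded (R : realType) (U : normedModType R) (X : Type)
  (P : X -> R) (F : U -> X -> R) : Prop :=
  forall w : U, exists C : R, forall x : X, `|F w x| <= C * P x.

Definition linear_form (R : realType) (E : lmodType R) (f : E -> R) : Prop :=
  forall (a : R) (x y : E), f (a *: x + y) = a * f x + f y.

(* Three times continuously Frechet differentiable map G : U -> Y, where Y is a
   space of bounded forms on W (W-arguments weighted by PW, linear in the
   sense of linW).  F0 = G, and Fk w phi1 .. phik x is the k-th Frechet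
   derivative of G at w in the directions phi1..phik, evaluated at x : W. *)
Definition C3_frechet (R : realType) (U : normedModType R) (W : Type)
  (PW : W -> R) (linW : (W -> R) -> Prop)
  (F0 : U -> W -> R) (F1 : U -> U -> W -> R) (F2 : U -> U -> U -> W -> R)
  (F3 : U -> U -> U -> U -> W -> R) : Prop :=
  [/\
      (forall w, linW (F0 w)) /\ op_bounded PW F0,
      [/\ frechet_deriv PW F0 F1,
          (forall w x, linear_form (fun p : U => F1 w p x)),
          (forall w p, linW (F1 w p)) &
          op_bounded (fun y : U * W => `|y.1| * PW y.2) (fun w y => F1 w y.1 y.2)],
      [/\ frechet_deriv (fun y : U * W => `|y.1| * PW y.2)
            (fun w y => F1 w y.1 y.2) (fun w h y => F2 w y.1 h y.2),
          (forall w q x, linear_form (fun p : U => F2 w p q x)),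
          (forall w p x, linear_form (fun q : U => F2 w p q x)),
          (forall w p q, linW (F2 w p q)) &
          op_bounded (fun y : U * U * W => `|y.1.1| * `|y.1.2| * PW y.2)
            (fun w y => F2 w y.1.1 y.1.2 y.2)] &
      [/\ frechet_deriv (fun y : U * U * W => `|y.1.1| * `|y.1.2| * PW y.2)
            (fun w y => F2 w y.1.1 y.1.2 y.2)
            (fun w h y => F3 w y.1.1 y.1.2 h y.2),
          (forall w q r x, linear_form (fun p : U => F3 w p q r x)),
          (forall w p r x, linear_form (fun q : U => F3 w p q r x)),
          (forall w p q x, linear_form (fun r : U => F3 w p q r x)) &
          (forall w p q r, linW (F3 w p q r)) /\
          op_bounded (fun y : U * U * U * W =>
                        `|y.1.1.1| * `|y.1.1.2| * `|y.1.2| * PW y.2)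
            (fun w y => F3 w y.1.1.1 y.1.1.2 y.1.2 y.2) /\
          op_continuous (fun y : U * U * U * W =>
                        `|y.1.1.1| * `|y.1.1.2| * `|y.1.2| * PW y.2)
            (fun w y => F3 w y.1.1.1 y.1.1.2 y.1.2 y.2)]].

(* A : U -> V^* is three times continuously Frechet differentiable;
   A w v is the value of A(w) at v, A1 w phi v = A'(w)(phi,v), etc. *)
Definition C3_operator (R : realType) (U V : normedModType R)
  (A : U -> V -> R) (A1 : U -> U -> V -> R) (A2 : U -> U -> U -> V -> R)
  (A3 : U -> U -> U -> U -> V -> R) : Prop :=
  C3_frechet (fun v : V => `|v|) (@linear_form R V) A A1 A2 A3.

Definition C3_functional (R : realType) (U : normedModType R)
  (J : U -> R) (J1 : U -> U -> R) (J2 : U -> U -> U -> R)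
  (J3 : U -> U -> U -> U -> R) : Prop :=
  C3_frechet (fun _ : unit => 1) (fun _ => True)
    (fun w _ => J w) (fun w p _ => J1 w p) (fun w p q _ => J2 w p q)
    (fun w p q r _ => J3 w p q r).

Definition fin_dim_subspace (R : realType) (E : lmodType R) (S : set E) : Prop :=
  exists (n : nat) (b : 'I_n -> E),
    S = [set x | exists c : 'I_n -> R, x = \sum_(i < n) c i *: b i].

Definition rho (R : realType) (U V : Type) (A : U -> V -> R) (ut : U) (v : V) : R :=
  - A ut v.
Definition rho_star (R : realType) (U V : Type) (J1 : U -> U -> R)
  (A1 : U -> U -> V -> R) (ut : U) (zt : V) (phi : U) : R :=
  J1 ut phi - A1 ut phi zt.

Definition remainder3 (R : realType) (U V : normedModType R)
  (J3 : U -> U -> U -> U -> R) (A2 : U -> U -> U -> V -> R)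
  (A3 : U -> U -> U -> U -> V -> R) (ut uh : U) (zt zh : V) : R :=
  let e := uh - ut in let es := zh - zt in
  2^-1 * \int[@lebesgue_measure R]_(s in `[0%R, 1%R])
    ((J3 (ut + s *: e) e e e
      - A3 (ut + s *: e) e e e (zt + s *: es)
      - 3 * A2 (ut + s *: e) e e es) * (s * (s - 1))).

Definition eta2 (R : realType) (U V : normedModType R)
  (A : U -> V -> R) (A1 : U -> U -> V -> R) (A2 : U -> U -> U -> V -> R)
  (A3 : U -> U -> U -> U -> V -> R) (J1 : U -> U -> R)
  (J3 : U -> U -> U -> U -> R) (ut uh : U) (zt zh : V) : R :=
  2^-1 * rho A ut (zh - zt) + 2^-1 * rho_star J1 A1 ut zt (uh - ut)
  + rho A ut zt + remainder3 J3 A2 A3 ut uh zt zh.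

(* Main.v *)
Set Warnings "-notation-overridden,-ambiguous-paths,-notation-incompatible-prefix,-deprecated".
Require Import Defs.
From HB Require Import structures.
From mathcomp Require Import all_boot all_order all_algebra.
From mathcomp Require Import all_classical all_reals all_analysis.
From mathcomp Require Import ring lra.
Import Order.TTheory GRing.Theory Num.Theory.
Import numFieldNormedType.Exports.
Local Open Scope classical_set_scope.
Local Open Scope ring_scope.
Set Implicit Arguments. Unset Strict Implicit.

Lemma path_deriv (R : realType) (U : normedModType R) (X : Type) (P : X -> R)
  (F : U -> X -> R) (DF : U -> U -> X -> R) :
  frechet_deriv P F DF ->
  (forall w x (t : R) h, DF w (t *: h) x = t * DF w h x) ->
  forall (w0 e : U) (x : X) (s : R), is_derive s (1:R) (fun t : R => F (w0 + t *: e) x)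
                     (DF (w0 + s *: e) e x).
Proof.
move=> hF hl w0 e x s.
set D := DF (w0 + s *: e) e x.
have H : (fun h : R => h^-1 *: (((fun t : R => F (w0 + t *: e) x) \o shift s) (h *: 1)
   - F (w0 + s *: e) x)) @ 0^' --> D.
  apply/cvgrPdist_le => eps eps0.
  pose c := eps / (`|e| * `|P x| + 1).
  have k0 : 0 < `|e| * `|P x| + 1 by rewrite ltr_pwDr // mulr_ge0.
  have c0 : 0 < c by rewrite divr_gt0.
  have [d [d0 Hd]] := hF (w0 + s *: e) c c0.
  have d'0 : 0 < d / (`|e| + 1) by rewrite divr_gt0 // ltr_pwDr.
  near=> h.
  have hn0 : h != 0 by near: h; exact: nbhs_dnbhs_neq.
  have hlt : `|h| < d / (`|e| + 1) by near: h; exact: dnbhs0_lt.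
  have he : `|h *: e| < d.
    rewrite normrZ.
    have e1 : 0 < `|e| + 1 by rewrite ltr_pwDr.
    apply: (le_lt_trans (y := `|h| * (`|e| + 1))).
      by rewrite ler_wpM2l // lerDl.
    by rewrite -ltr_pdivlMr.
  have := Hd _ he x.
  rewrite hl normrZ => Hb.
  rewrite /= [_%:A]mulr1 (addrC h s) scalerDl addrA -/D.
  set Q := F _ x - F _ x in Hb *.
  have -> : D - h^-1 *: Q = - (h^-1 * (Q - h * D)).
    change (D - h^-1 * Q = - (h^-1 * (Q - h * D))).
    by field.
  rewrite normrN normrM normfV ler_pdivrMl ?normr_gt0 //.
  apply: (le_trans Hb).
  have ceq : c * (`|e| * `|P x| + 1) = eps by rewrite /c divfK // gt_eqF.
  have hP : P x <= `|P x| by rewrite real_ler_norm // num_real.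
  have pos : 0 <= c * `|h| * (`|e| * (`|P x| - P x) + 1).
    apply: mulr_ge0; first by apply: mulr_ge0; [exact: ltW|].
    by apply: addr_ge0 => //; apply: mulr_ge0 => //; rewrite subr_ge0.
  rewrite -ceq; nra.
apply: DeriveDef; [exact: cvgP H | exact: cvg_lim H].
Unshelve. all: by end_near.
Qed.

Lemma pt_cont (R : realType) (U : normedModType R) (X : Type) (P : X -> R)
  (F : U -> X -> R) : op_continuous P F -> forall x, continuous (fun w : U => F w x).
Proof.
move=> hF x w; apply/cvgrPdist_le => eps eps0.
pose c := eps / (`|P x| + 1).
have k0 : 0 < `|P x| + 1 by rewrite ltr_pwDr.
have c0 : 0 < c by rewrite divr_gt0.
have [d [d0 Hd]] := hF w c c0.
near=> w'.
have hw : `|w' - w| < d.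
  near: w'. exact: (@cvgr_distC_lt _ _ _ _ _ id w).
rewrite distrC; apply: (le_trans (Hd _ hw x)).
have ceq : c * (`|P x| + 1) = eps by rewrite /c divfK // gt_eqF.
have hP : P x <= `|P x| by rewrite real_ler_norm // num_real.
rewrite -ceq; nra.
Unshelve. all: by end_near. Qed.

Lemma path_cont (R : realType) (U : normedModType R) (w0 e : U) :
  continuous (fun t : R => w0 + t *: e).
Proof.
move=> s; apply: (@continuousD _ _ _ (cst w0) (fun t : R => t *: e)).
  exact: cst_continuous.
by apply: continuousZr_tmp.
Qed.

Lemma comb_der (R : realType) (a b c d : R -> R) (k da db dc dd s : R) :
  is_derive s 1 a da -> is_derive s 1 b db -> is_derive s 1 c dc ->
  is_derive s 1 d dd ->
  is_derive s 1 (fun t => a t - (b t + t * c t) - k * d t)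
    (da - (db + (c s + s * dc)) - k * dd).
Proof.
move=> ha hb hc hd.
have := is_deriveB (is_deriveB ha (is_deriveD hb (is_deriveM (@is_derive_id _ _ s 1) hc)))
   (is_deriveZ k hd).
move=> H.
have -> : (fun t => a t - (b t + t * c t) - k * d t) = a - (b + id * c) - k \*: d.
  by apply/funext => t.
eapply is_derive_eq; first exact H.
rewrite [(c s)%:A]mulr1 -[s *: dc]/(s * dc) -[k *: dd]/(k * dd).
by rewrite (addrC (s * dc)).
Qed.

Lemma der_cont (R : realType) (f : R -> R) (s df : R) :
  is_derive s (1:R) f df -> {for s, continuous f}.
Proof.
move=> h; apply/differentiable_continuous; rewrite -derivable1_diffP.
exact: ex_derive.
Qed.

Lemma trapezoid (R : realType) (g g1 g2 g3 : R -> R) :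
  (forall s : R, is_derive s (1:R) g (g1 s)) ->
  (forall s : R, is_derive s (1:R) g1 (g2 s)) ->
  (forall s : R, is_derive s (1:R) g2 (g3 s)) ->
  continuous g3 ->
  \int[@lebesgue_measure R]_(s in `[0%R, 1%R]) (g3 s * (s * (s - 1)))
    = 2 * (g 1 - g 0) - (g1 0 + g1 1).
Proof.
move=> d0 d1 d2 c3.
pose p := fun t : R => t * (t - 1).
have dp : forall t : R, is_derive t (1:R) p (2 * t - 1).
  move=> t.
  have H := is_deriveM (@is_derive_id _ _ t 1) (is_deriveB (@is_derive_id _ _ t 1) (@is_derive_cst _ _ _ (1:R) t 1)).
  have -> : p = id * (id - cst 1) by apply/funext => x.
  eapply is_derive_eq; first exact H.
  rewrite [(_ - _)%:A]mulr1 -[t *: _]/(t * _) /=. 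
  by rewrite subr0 mulr1; ring.
pose q := fun t : R => 2 * t - 1.
have dq : forall t : R, is_derive t (1:R) q 2.
  move=> t.
  have H := is_deriveB (is_deriveZ 2 (@is_derive_id _ _ t 1)) (@is_derive_cst _ _ _ (1:R) t 1).
  have -> : q = 2 \*: id - cst 1 by apply/funext => x.
  eapply is_derive_eq; first exact H.
  by rewrite subr0 -[2 *: _]/(2 * _) mulr1.
pose Fa := fun t => g2 t * p t - g1 t * q t + 2 * g t.
have dF : forall t : R, is_derive t (1:R) Fa (g3 t * p t).
  move=> t.
  have H := is_deriveD (is_deriveB (is_deriveM (d2 t) (dp t)) (is_deriveM (d1 t) (dq t)))
     (is_deriveZ 2 (d0 t)).
  have -> : Fa = g2 * p - g1 * q + 2 \*: g by apply/funext => x.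
  eapply is_derive_eq; first exact H.
  rewrite /q /p -![_ *: _]/(_ * _) /=; ring.
have cf : continuous (fun s => g3 s * p s).
  move=> s; apply: (@continuousM _ _ g3 p); first exact: c3.
  exact: (der_cont (dp s)).
have := @continuous_FTC2 R (fun s => g3 s * p s) Fa 0 1 ltr01.
rewrite /Rintegral => ->.
- by rewrite /= /Fa /p /q; ring.
- exact: continuous_subspaceT.
- split.
  + by move=> x _; case: (dF x).
  + by apply: cvg_at_right_filter; exact (der_cont (dF 0)).
  + by apply: cvg_at_left_filter; exact (der_cont (dF 1)).
- by move=> x _; rewrite derive1E derive_val.
Qed.

Lemma lin0 (R : realType) (E : lmodType R) (f : E -> R) : linear_form f -> f 0 = 0.
Proof.
move=> h; have := h 1 0 0; rewrite scaler0 add0r mul1r => H0; lra.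
Qed.

Lemma linZ (R : realType) (E : lmodType R) (f : E -> R) : linear_form f ->
  forall t x, f (t *: x) = t * f x.
Proof. by move=> h t x; have := h t x 0; rewrite addr0 lin0 // addr0. Qed.

Lemma linD (R : realType) (E : lmodType R) (f : E -> R) : linear_form f ->
  forall x y, f (x + y) = f x + f y.
Proof. by move=> h x y; have := h 1 x y; rewrite scale1r mul1r. Qed.

Lemma fin_dim_sub (R : realType) (E : lmodType R) (S : set E) :
  fin_dim_subspace S -> forall x y, S x -> S y -> S (x - y).
Proof.
move=> [n [b ->]] x y /= [cx ->] [cy ->].
exists (fun i => cx i - cy i).
by rewrite -sumrB; apply: eq_bigr => i _; rewrite scalerBl.
Qed.

Lemma comb_cont (R : realType) (a b c d : R -> R) (k : R) :
  continuous a -> continuous b -> continuous c -> continuous d ->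
  continuous (fun t => a t - (b t + t * c t) - k * d t).
Proof.
move=> ca cb cc cd s.
have -> : (fun t => a t - (b t + t * c t) - k * d t) = a - (b + id * c) - k \*: d.
  by apply/funext => t.
apply: continuousB; first apply: continuousB.
- exact: ca.
- apply: continuousD; first exact: cb.
  by apply: continuousM => //; exact: cc.
- by apply: continuousZl_tmp; exact: cd.
Qed.

Unset Implicit Arguments. Set Strict Implicit.

Theorem mainTheorem6 (R : realType)
  (U V : completeNormedModType R)
  (A : U -> V -> R) (A1 : U -> U -> V -> R) (A2 : U -> U -> U -> V -> R)
  (A3 : U -> U -> U -> U -> V -> R)
  (J : U -> R) (J1 : U -> U -> R) (J2 : U -> U -> U -> R)
  (J3 : U -> U -> U -> U -> R)
  (hA : C3_operator A A1 A2 A3) (hJ : C3_functional J J1 J2 J3)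
  (u : U) (z : V)
  (hu : forall v : V, A u v = 0)
  (hz : forall phi : U, A1 u phi z = J1 u phi)
  (Uh : set U) (Vh : set V)
  (hUh : fin_dim_subspace Uh) (hVh : fin_dim_subspace Vh)
  (uh : U) (zh : V) (uh_in : Uh uh) (zh_in : Vh zh)
  (huh : forall v : V, Vh v -> A uh v = 0)
  (hzh : forall phi : U, Uh phi -> A1 uh phi zh = J1 uh phi)
  (ut : U) (zt : V) (ut_in : Uh ut) (zt_in : Vh zt) :
  `|J u - J ut| - `|J u - J uh|
    <= `|eta2 A A1 A2 A3 J1 J3 ut uh zt zh|
    <= `|J u - J ut| + `|J u - J uh|.
Proof.
case: hA => [[A0lin _] [fA1 A1p A1v _] [fA2 A2p A2q A2v _] [fA3 A3p A3q A3r [A3v [_ cA3]]]].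
case: hJ => [_ [fJ1 J1p _ _] [fJ2 J2p J2q _ _] [fJ3 J3p J3q J3r [_ [_ cJ3]]]].
set e := uh - ut; set es := zh - zt.
have e_in : Uh e by apply: fin_dim_sub.
have es_in : Vh es by apply: fin_dim_sub.
pose w := fun t : R => ut + t *: e.
have dJ0 : forall s, is_derive s (1:R) (fun t => J (w t)) (J1 (w s) e).
  move=> s; exact (path_deriv fJ1 (fun w x t h => linZ (J1p w x) t h) ut e tt s).
have dJ1 : forall s, is_derive s (1:R) (fun t => J1 (w t) e) (J2 (w s) e e).
  move=> s; exact (path_deriv fJ2 (fun w y t h => linZ (J2q w y.1 y.2) t h) ut e (e, tt) s).
have dJ2 : forall s, is_derive s (1:R) (fun t => J2 (w t) e e) (J3 (w s) e e e).
  move=> s; exact (path_deriv fJ3 (fun w y t h => linZ (J3r w y.1.1 y.1.2 y.2) t h) ut e ((e, e), tt) s).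
have dA0 : forall x s, is_derive s (1:R) (fun t => A (w t) x) (A1 (w s) e x).
  move=> x s; exact (path_deriv fA1 (fun w x t h => linZ (A1p w x) t h) ut e x s).
have dA1 : forall x s, is_derive s (1:R) (fun t => A1 (w t) e x) (A2 (w s) e e x).
  move=> x s; exact (path_deriv fA2 (fun w y t h => linZ (A2q w y.1 y.2) t h) ut e (e, x) s).
have dA2 : forall x s, is_derive s (1:R) (fun t => A2 (w t) e e x) (A3 (w s) e e e x).
  move=> x s; exact (path_deriv fA3 (fun w y t h => linZ (A3r w y.1.1 y.1.2 y.2) t h) ut e ((e, e), x) s).
pose g := fun t => J (w t) - (A (w t) zt + t * A (w t) es) - 0 * (fun _ : R => (0:R)) t.
pose g1 := fun t => J1 (w t) e - (A1 (w t) e zt + t * A1 (w t) e es) - 1 * A (w t) es.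
pose g2 := fun t => J2 (w t) e e - (A2 (w t) e e zt + t * A2 (w t) e e es) - 2 * A1 (w t) e es.
pose g3 := fun t => J3 (w t) e e e - (A3 (w t) e e e zt + t * A3 (w t) e e e es)
   - 3 * A2 (w t) e e es.
have dg : forall s, is_derive s (1:R) g (g1 s).
  move=> s; eapply is_derive_eq.
    exact (comb_der 0 (dJ0 s) (dA0 zt s) (dA0 es s) (@is_derive_cst _ _ _ (0:R) s 1)).
  rewrite /g1; ring.
have dg1 : forall s, is_derive s (1:R) g1 (g2 s).
  move=> s; eapply is_derive_eq.
    exact (comb_der 1 (dJ1 s) (dA1 zt s) (dA1 es s) (dA0 es s)).
  rewrite /g2; ring.
have dg2 : forall s, is_derive s (1:R) g2 (g3 s).
  move=> s; eapply is_derive_eq.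
    exact (comb_der 2 (dJ2 s) (dA2 zt s) (dA2 es s) (dA1 es s)).
  rewrite /g3; ring.
have cg3 : continuous g3.
  apply: comb_cont.
  - move=> s; apply: (@continuous_comp _ _ _ (fun t => w t) (fun v => J3 v e e e)).
      exact: path_cont.
    exact (@pt_cont _ _ _ _ _ cJ3 (((e, e), e), tt) (w s)).
  - move=> s; apply: (@continuous_comp _ _ _ (fun t => w t) (fun v => A3 v e e e zt)).
      exact: path_cont.
    exact (@pt_cont _ _ _ _ _ cA3 (((e, e), e), zt) (w s)).
  - move=> s; apply: (@continuous_comp _ _ _ (fun t => w t) (fun v => A3 v e e e es)).
      exact: path_cont.
    exact (@pt_cont _ _ _ _ _ cA3 (((e, e), e), es) (w s)).
  - by move=> s; exact (der_cont (dA2 es s)).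
have trap := trapezoid dg dg1 dg2 cg3.
have Rem : remainder3 J3 A2 A3 ut uh zt zh = 2^-1 * (2 * (g 1 - g 0) - (g1 0 + g1 1)).
  rewrite -trap /remainder3 /= -/e -/es.
  congr (_ * _); apply: eq_Rintegral => s _.
  by rewrite /g3 /w (linD (A3v _ _ _ _)) (linZ (A3v _ _ _ _)).
have w1 : w 1 = uh by rewrite /w scale1r /e addrC subrK.
have w0 : w 0 = ut by rewrite /w scale0r addr0.
have hA1 : A1 uh e zt + 1 * A1 uh e es = J1 uh e.
  by rewrite mul1r -linD // /es addrC subrK hzh.
have Heta : eta2 A A1 A2 A3 J1 J3 ut uh zt zh = J uh - J ut.
  rewrite /eta2 Rem /rho /rho_star -/e -/es /g /g1 w1 w0 hA1 !huh //.

  by field.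
rewrite Heta.
have -> : J uh - J ut = (J u - J ut) - (J u - J uh) by ring.
by apply/andP; split; [exact: lerB_dist | exact: ler_normB].
Qed.
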